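(* Let $\mathcal{L}\in\mathbb{R}^{N_1\times N_2\times N_3}$ be any tensor. Then $$\frac{\mathrm{inc}(\mathcal{L})}{\sqrt{N_3}}\le\xi(\mathcal{L})\le 2\,\mathrm{inc}(\mathcal{L}).$$
   Context: For $\mathcal{A}\in\mathbb{R}^{N_1\times N_2\times N_3}$ write $A^{(k)}=\mathcal{A}(:,:,k)$ for its frontal slices. $\mathrm{bcirc}(\mathcal{A})\in\mathbb{R}^{N_1N_3\times N_2N_3}$ is the block circulant matrix whose $(i,j)$ block is $A^{(((i-j)\bmod N_3)+1)}$; $\mathrm{unfold}$ stacks the frontal slices vertically, $\mathrm{fold}$ is its inverse, and the t-product is $\mathcal{A}*\mathcal{B}=\mathrm{fold}(\mathrm{bcirc}(\mathcal{A})\,\mathrm{unfold}(\mathcal{B}))$. The transpose $\mathcal{A}^\top$ transposes each frontal slice and reverses the order of slices $2,\dots,N_3$. The identity tensor has first frontal slice the identity and other slices zero; f-diagonal means every frontal slice is diagonal. Every $\mathcal{L}$ of tubal rank $R$ has a skinny t-SVD $\mathcal{L}=\mathcal{U}*\mathcal{S}*\mathcal{V}^\top$ with $\mathcal{U}\in\mathbb{R}^{N_1\times R\times N_3}$, $\mathcal{V}\in\mathbb{R}^{N_2\times R\times N_3}$, $\mathcal{U}^\top*\mathcal{U}=\mathcal{V}^\top*\mathcal{V}=\mathcal{I}$, $\mathcal{S}$ f-diagonal. Tensor spectral norm $\|\mathcal{A}\|=\|\mathrm{bcirc}(\mathcal{A})\|$; $\|\cdot\|_\infty$, $\|\cdot\|_F$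 are the entrywise max-absolute-value and Frobenius norms. $T(\mathcal{L})=\{\mathcal{U}*\mathcal{Y}^\top+\mathcal{W}*\mathcal{V}^\top:\mathcal{Y}\in\mathbb{R}^{N_2\times R\times N_3},\mathcal{W}\in\mathbb{R}^{N_1\times R\times N_3}\}$ and $\xi(\mathcal{L})=\max_{\mathcal{N}\in T(\mathcal{L}),\|\mathcal{N}\|\le1}\|\mathcal{N}\|_\infty$. For $N\in\{N_1,N_2\}$ and $1\le n\le N$, let $\mathring{e}_n\in\mathbb{R}^{N\times1\times N_3}$ be the tensor with $(n,1,1)$ entry $1$ and all other entries $0$. With $\mathcal{P}_{\mathcal{U}}=\mathcal{U}*\mathcal{U}^\top$ and $\mathcal{P}_{\mathcal{V}}=\mathcal{V}*\mathcal{V}^\top$ (projections onto $\mathrm{span}(\mathcal{U})$, $\mathrm{span}(\mathcal{V})$), set $\beta(\mathrm{span}(\mathcal{U}))=\max_{1\le n\le N_1}\|\mathcal{P}_{\mathcal{U}}*\mathring{e}_n\|_F$, $\beta(\mathrm{span}(\mathcal{V}))=\max_{1\le n\le N_2}\|\mathcal{P}_{\mathcal{V}}*\mathring{e}_n\|_F$, and $\mathrm{inc}(\mathcal{L})=\max\{\beta(\mathrm{span}(\mathcal{U})),\beta(\mathrm{span}(\mathcal{V}))\}$. *)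

(* Defs.v *)
From HB Require Import structures.
From mathcomp Require Import all_boot all_order all_algebra.
From mathcomp Require Import all_classical reals.
Set Implicit Arguments. Unset Strict Implicit. Unset Printing Implicit Defensive.
Import Order.TTheory GRing.Theory Num.Theory.
Local Open Scope ring_scope.
Local Open Scope classical_set_scope.

Lemma osub_proof n (k j : 'I_n) : ((k + (n - j)) %% n < n)%N.
Proof. apply: ltn_pmod; exact: (leq_ltn_trans (leq0n _) (ltn_ord k)). Qed.
Definition osub n (k j : 'I_n) : 'I_n := Ordinal (osub_proof k j).

Lemma oneg_proof n (k : 'I_n) : ((n - k) %% n < n)%N.
Proof. apply: ltn_pmod; exact: (leq_ltn_trans (leq0n _) (ltn_ord k)). Qed.
Definition oneg n (k : 'I_n) : 'I_n := Ordinal (oneg_proof k).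

Section Tensors.
Variable R : realType.

(* A tensor in R^{n1 x n2 x n3}, given by its frontal slices A^(k), k < n3
   (0-based: slice k here is slice k+1 of the paper). *)
Definition tensor (n1 n2 n3 : nat) := {ffun 'I_n3 -> 'M[R]_(n1, n2)}.

(* bcirc(A): block (i,j) is A^((i-j) mod n3); rows indexed by (block, row),
   columns by (block, column). *)
Definition bcirc n1 n2 n3 (A : tensor n1 n2 n3)
  : 'I_n3 * 'I_n1 -> 'I_n3 * 'I_n2 -> R :=
  fun p q => A (osub p.1 q.1) p.2 q.2.

(* t-product: fold(bcirc(A) unfold(B)), whose k-th slice is
   sum_j A^((k-j) mod n3) B^(j). *)
Definition tprod n1 n2 n4 n3 (A : tensor n1 n2 n3) (B : tensor n2 n4 n3)
  : tensor n1 n4 n3 :=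
  [ffun k => \sum_(j < n3) A (osub k j) *m B j].

(* transpose: transpose each slice and reverse slices 2..n3 *)
Definition ttr n1 n2 n3 (A : tensor n1 n2 n3) : tensor n2 n1 n3 :=
  [ffun k => (A (oneg k))^T].

Definition tid r n3 : tensor r r n3 :=
  [ffun k : 'I_n3 => if val k == 0%N then 1%:M else 0].

Definition fdiag r1 r2 n3 (S : tensor r1 r2 n3) : Prop :=
  forall k (i : 'I_r1) (j : 'I_r2), (val i != val j) -> S k i j = 0.

Definition vnorm2 (J : finType) (x : J -> R) : R :=
  Num.sqrt (\sum_(j : J) x j ^+ 2).

Definition opnorm (I J : finType) (M : I -> J -> R) : R :=
  sup [set vnorm2 (fun i => \sum_(j : J) M i j * x j) |
         x in [set x : J -> R | vnorm2 x <= 1]].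

Definition tspec n1 n2 n3 (A : tensor n1 n2 n3) : R := opnorm (bcirc A).

Definition tinf n1 n2 n3 (A : tensor n1 n2 n3) : R :=
  \big[Num.max/0]_(k < n3) \big[Num.max/0]_(i < n1) \big[Num.max/0]_(j < n2)
    `|A k i j|.

Definition tfrob n1 n2 n3 (A : tensor n1 n2 n3) : R :=
  Num.sqrt (\sum_(k < n3) \sum_(i < n1) \sum_(j < n2) A k i j ^+ 2).

Definition tangent n1 n2 n3 r (U : tensor n1 r n3) (V : tensor n2 r n3)
  : set (tensor n1 n2 n3) :=
  [set N | exists (Y : tensor n2 r n3) (W : tensor n1 r n3),
      N = [ffun k => tprod U (ttr Y) k + tprod W (ttr V) k]].

Definition xi n1 n2 n3 r (U : tensor n1 r n3) (V : tensor n2 r n3) : R :=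
  sup [set tinf N | N in [set N | tangent U V N /\ tspec N <= 1]].

Definition ebasis N n3 (n : 'I_N) : tensor N 1 n3 :=
  [ffun k : 'I_n3 => if val k == 0%N then delta_mx n ord0 else 0].

Definition proj N r n3 (U : tensor N r n3) : tensor N N n3 := tprod U (ttr U).

Definition beta N r n3 (U : tensor N r n3) : R :=
  \big[Num.max/0]_(n < N) tfrob (tprod (proj U) (ebasis n3 n)).

Definition inc n1 n2 n3 r (U : tensor n1 r n3) (V : tensor n2 r n3) : R :=
  Num.max (beta U) (beta V).

End Tensors.

(* Main.v *)
Require Import Defs.
From HB Require Import structures.
From mathcomp Require Import all_boot all_order all_algebra.
From mathcomp Require Import all_classical reals.
Import Order.TTheory GRing.Theory Num.Theory.
Local Open Scope ring_scope.


Lemma osubE n (k j : 'I_n.+1) : osub k j = k - j.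
Proof. by apply: val_inj => /=; rewrite modnDmr. Qed.
Lemma onegE n (k : 'I_n.+1) : oneg k = - k.
Proof. by apply: val_inj. Qed.
From mathcomp Require Import ring lra.
Set Implicit Arguments. Unset Strict Implicit.
Section CS.
Variable R : realType.

Lemma dsum_split (J : finType) (F G H : J -> J -> R) :
  \sum_i \sum_j (F i j + G i j - 2 * H i j) =
  \sum_i \sum_j F i j + \sum_i \sum_j G i j - 2 * \sum_i \sum_j H i j.
Proof.
rewrite mulr_sumr -big_split -sumrB /=; apply: eq_bigr => i _.
by rewrite mulr_sumr -big_split -sumrB.
Qed.

Lemma sum_prod (J : finType) (f g : J -> R) :
  (\sum_i f i) * (\sum_j g j) = \sum_i \sum_j f i * g j.
Proof. by rewrite big_distrl; apply: eq_bigr => i _; rewrite big_distrr. Qed.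

Lemma cs2 (J : finType) (x y : J -> R) :
  (\sum_j x j * y j) ^+ 2 <= (\sum_j x j ^+ 2) * (\sum_j y j ^+ 2).
Proof.
have H : 0 <= \sum_i \sum_j (x i * y j - x j * y i) ^+ 2.
  by apply: sumr_ge0 => i _; apply: sumr_ge0 => j _; exact: sqr_ge0.
have E1 : forall i j, (x i * y j - x j * y i) ^+ 2 =
   x i ^+2 * y j ^+ 2 + x j ^+ 2 * y i ^+ 2 - 2 * ((x i * y i) * (x j * y j)).
  by move=> i j; ring.
have E : \sum_i \sum_j (x i * y j - x j * y i) ^+ 2 =
   2 * ((\sum_j x j ^+ 2) * (\sum_j y j ^+ 2) - (\sum_j x j * y j) ^+ 2).
  under eq_bigr do under eq_bigr do rewrite E1.
  rewrite dsum_split [X in _ + X - _]exchange_big /= -!sum_prod expr2.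
  ring.
by move: H; rewrite E pmulr_rge0 // subr_ge0.
Qed.

Lemma cs (J : finType) (x y : J -> R) :
  `|\sum_j x j * y j| <= vnorm2 x * vnorm2 y.
Proof.
rewrite /vnorm2 -sqrtrM; last by apply: sumr_ge0 => j _; exact: sqr_ge0.
by rewrite -sqrtr_sqr ler_sqrt ?cs2 // mulr_ge0 // sumr_ge0 // => j _; exact: sqr_ge0.
Qed.

Local Open Scope classical_set_scope.

Definition mv (I J : finType) (M : I -> J -> R) (x : J -> R) : I -> R :=
  fun i => \sum_j M i j * x j.

Lemma sumsq_ge0 (J : finType) (x : J -> R) : 0 <= \sum_j x j ^+ 2.
Proof. by apply: sumr_ge0 => j _; exact: sqr_ge0. Qed.

Lemma vnorm2_ge0 (J : finType) (x : J -> R) : 0 <= vnorm2 x.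
Proof. exact: sqrtr_ge0. Qed.

Lemma vnorm2_le1 (J : finType) (x : J -> R) : vnorm2 x <= 1 -> \sum_j x j ^+ 2 <= 1.
Proof. by rewrite /vnorm2 => H; rewrite -(ler_sqrt _ ler01) sqrtr1. Qed.

Lemma vnorm2_scale (J : finType) (a : R) (x : J -> R) :
  vnorm2 (fun j => a * x j) = `|a| * vnorm2 x.
Proof.
rewrite /vnorm2 -sqrtr_sqr -sqrtrM ?sqr_ge0 // mulr_sumr.
by congr Num.sqrt; apply: eq_bigr => j _; rewrite exprMn.
Qed.

Lemma vnorm2_eq0 (J : finType) (x : J -> R) : vnorm2 x = 0 -> forall j, x j = 0.
Proof.
move=> /eqP; rewrite sqrtr_eq0 => H j.
have H0 : \sum_j x j ^+ 2 = 0 by apply/le_anti; rewrite H sumsq_ge0.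
have := psumr_eq0P (fun j _ => sqr_ge0 (x j)) H0 (i := j) isT.
by move/eqP; rewrite sqrf_eq0 => /eqP.
Qed.

Lemma mv_bound (I J : finType) (M : I -> J -> R) (x : J -> R) :
  vnorm2 (mv M x) <= Num.sqrt (\sum_i \sum_j M i j ^+ 2) * vnorm2 x.
Proof.
rewrite /vnorm2 -sqrtrM; last by apply: sumr_ge0 => i _; exact: sumsq_ge0.
rewrite ler_sqrt; last by rewrite mulr_ge0 // ?sumsq_ge0 // sumr_ge0 // => i _; exact: sumsq_ge0.
rewrite mulr_suml; apply: ler_sum => i _; exact: cs2.
Qed.

Lemma opnorm_ub (I J : finType) (M : I -> J -> R) :
  ubound [set vnorm2 (mv M x) | x in [set x : J -> R | vnorm2 x <= 1]]
     (Num.sqrt (\sum_i \sum_j M i j ^+ 2)).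
Proof.
move=> _ [x /= Hx <-]; apply: le_trans (mv_bound M x) _.
by rewrite -[leRHS]mulr1 ler_wpM2l // sqrtr_ge0.
Qed.

Lemma opnorm_frob (I J : finType) (M : I -> J -> R) :
  opnorm M <= Num.sqrt (\sum_i \sum_j M i j ^+ 2).
Proof.
apply: ge_sup; last exact: opnorm_ub.
exists (vnorm2 (mv M (fun _ => 0))), (fun _ => 0) => //=.
by rewrite /vnorm2 big1 ?sqrtr0 // => j _; rewrite expr0n.
Qed.

Lemma opnorm_le (I J : finType) (M : I -> J -> R) (x : J -> R) :
  vnorm2 x <= 1 -> vnorm2 (mv M x) <= opnorm M.
Proof.
move=> Hx; have := ub_le_sup (ex_intro _ _ (opnorm_ub (M:=M))).
by move=> /(_ (vnorm2 (mv M x))); apply; exists x.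
Qed.

Lemma opnorm_scale (I J : finType) (M : I -> J -> R) (x : J -> R) :
  opnorm M <= 1 -> vnorm2 (mv M x) <= vnorm2 x.
Proof.
move=> HM.
have [H0|Hpos] := eqVneq (vnorm2 x) 0.
  rewrite H0 /vnorm2 big1 ?sqrtr0 // => i _.
  by rewrite /mv big1 ?expr0n // => j _; rewrite (vnorm2_eq0 H0) mulr0.
have cpos : 0 < vnorm2 x by rewrite lt_def Hpos vnorm2_ge0.
pose c := (vnorm2 x)^-1.
have H1 : vnorm2 (fun j => c * x j) <= 1.
  by rewrite vnorm2_scale ger0_norm ?invr_ge0 ?vnorm2_ge0 // mulVf.
have H2 := le_trans (opnorm_le M H1) HM.
have E : mv M (fun j => c * x j) = (fun i => c * mv M x i).
  apply: funext => i; rewrite /mv mulr_sumr; apply: eq_bigr => j _.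
  by rewrite mulrCA.
move: H2; rewrite E vnorm2_scale ger0_norm ?invr_ge0 ?vnorm2_ge0 //.
by rewrite /c mulrC ler_pdivrMr // mul1r.
Qed.

Section MM.
Definition mm (I J K : finType) (M : I -> J -> R) (N : J -> K -> R) : I -> K -> R :=
  fun i k => \sum_j M i j * N j k.
Definition tr (I J : finType) (M : I -> J -> R) : J -> I -> R := fun j i => M i j.
Lemma faddE (I J : finType) (A B : I -> J -> R) i j : (A + B) i j = A i j + B i j.
Proof. by []. Qed.
Lemma foppE (I J : finType) (A : I -> J -> R) i j : (- A) i j = - A i j.
Proof. by []. Qed.
Lemma f0E (I J : finType) i j : (0 : I -> J -> R) i j = 0.
Proof. by []. Qed.

Lemma mmA_f (I J K L : finType) (A : I -> J -> R) (B : J -> K -> R) (C : K -> L -> R) :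
  mm (mm A B) C = mm A (mm B C).
Proof.
apply: funext => i; apply: funext => l; rewrite /mm.
under eq_bigr do rewrite big_distrl /=.
rewrite exchange_big; apply: eq_bigr => j _; rewrite big_distrr /=.
by apply: eq_bigr => k _; rewrite mulrA.
Qed.

Lemma mmDl (I J K : finType) (A B : I -> J -> R) (C : J -> K -> R) :
  mm (A + B) C = mm A C + mm B C.
Proof.
apply: funext => i; apply: funext => k; rewrite /mm !faddE -big_split /=.
by apply: eq_bigr => j _; rewrite mulrDl.
Qed.

Lemma mmDr (I J K : finType) (A : I -> J -> R) (B C : J -> K -> R) :
  mm A (B + C) = mm A B + mm A C.
Proof.
apply: funext => i; apply: funext => k; rewrite /mm !faddE -big_split /=.
by apply: eq_bigr => j _; rewrite mulrDr.
Qed.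

Lemma mmNl (I J K : finType) (A : I -> J -> R) (C : J -> K -> R) :
  mm (- A) C = - mm A C.
Proof.
apply: funext => i; apply: funext => k; rewrite /mm !foppE -sumrN.
by apply: eq_bigr => j _; rewrite mulNr.
Qed.

Lemma mmNr (I J K : finType) (A : I -> J -> R) (C : J -> K -> R) :
  mm A (- C) = - mm A C.
Proof.
apply: funext => i; apply: funext => k; rewrite /mm !foppE -sumrN.
by apply: eq_bigr => j _; rewrite mulrN.
Qed.

Lemma mmBl (I J K : finType) (A B : I -> J -> R) (C : J -> K -> R) :
  mm (A - B) C = mm A C - mm B C.
Proof. by rewrite mmDl mmNl. Qed.

Lemma mmBr (I J K : finType) (A : I -> J -> R) (B C : J -> K -> R) :
  mm A (B - C) = mm A B - mm A C.
Proof. by rewrite mmDr mmNr. Qed.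

Definition idm (I : finType) : I -> I -> R := fun i j => (i == j)%:R.

Lemma mm1l (I J : finType) (A : I -> J -> R) : mm (@idm I) A = A.
Proof.
apply: funext => i; apply: funext => j; rewrite /mm /idm (bigD1 i) //= eqxx mul1r.
by rewrite big1 ?addr0 // => k /negPf; rewrite eq_sym => ->; rewrite mul0r.
Qed.

Lemma mm1r (I J : finType) (A : I -> J -> R) : mm A (@idm J) = A.
Proof.
apply: funext => i; apply: funext => j; rewrite /mm /idm (bigD1 j) //= eqxx mulr1.
by rewrite big1 ?addr0 // => k /negPf ->; rewrite mulr0.
Qed.

Lemma tr_mm (I J K : finType) (A : I -> J -> R) (B : J -> K -> R) :
  tr (mm A B) = mm (tr B) (tr A).
Proof.
by apply: funext => k; apply: funext => i; rewrite /tr /mm; apply: eq_bigr => j _; rewrite mulrC.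
Qed.

Lemma trK (I J : finType) (A : I -> J -> R) : tr (tr A) = A.
Proof. by []. Qed.

End MM.

Lemma sym_idem_sq (I : finType) (M : I -> I -> R) :
  tr M = M -> mm M M = M -> forall a, \sum_c M a c ^+ 2 = M a a.
Proof.
move=> Hs Hi a; rewrite -{2}Hi /mm; apply: eq_bigr => c _.
have E : M c a = M a c := f_equal (fun f => f c a) (esym Hs).
by rewrite expr2 E.
Qed.

Section Core.
Variables (I J K L : finType).
Variables (Uh : I -> K -> R) (Vh : J -> L -> R).
Hypothesis HU : mm (tr Uh) Uh = @idm K.
Hypothesis HV : mm (tr Vh) Vh = @idm L.
Let P := mm Uh (tr Uh).
Let Q := mm Vh (tr Vh).

Lemma PU : mm P Uh = Uh.
Proof. by rewrite /P mmA_f HU mm1r. Qed.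

Lemma VQ : mm (tr Vh) Q = tr Vh.
Proof. by rewrite /Q -mmA_f HV mm1l. Qed.

Lemma Psym : tr P = P.
Proof. by rewrite /P tr_mm trK. Qed.

Lemma PP : mm P P = P.
Proof.
have E : mm (tr Uh) P = tr Uh by rewrite -[in LHS]Psym -tr_mm PU.
by rewrite {1}/P mmA_f E.
Qed.

Lemma decomp (Yh : J -> K -> R) (Wh : I -> L -> R) :
  let Nh := mm Uh (tr Yh) + mm Wh (tr Vh) in
  Nh = mm P Nh + mm (@idm I - P) (mm Nh Q).
Proof.
move=> Nh.
have E1 : mm (@idm I - P) Uh = 0 by rewrite mmBl mm1l PU subrr.
have E2 : mm Nh Q = mm Uh (mm (tr Yh) Q) + mm Wh (tr Vh).
  by rewrite /Nh mmDl !mmA_f VQ.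
rewrite E2 mmDr -mmA_f E1.
have -> : mm (0 : I -> K -> R) (mm (tr Yh) Q) = 0.
  by apply: funext => i; apply: funext => j; rewrite /mm big1 // => k _; rewrite f0E mul0r.
rewrite add0r /Nh mmDr -mmA_f.
rewrite PU mmBl mm1l -addrA; congr (_ + _).
by rewrite addrC subrK.
Qed.

Lemma DD : mm (@idm I - P) (@idm I - P) = @idm I - P.
Proof.
rewrite mmBl !mmBr mm1l mm1r PP subrr subr0.
by rewrite mm1l.
Qed.

Lemma Dsym : tr (@idm I - P) = @idm I - P.
Proof.
apply: funext => i; apply: funext => j.
rewrite /tr !faddE !foppE /idm eq_sym; congr (_ - _).
by rewrite -[in RHS]Psym.
Qed.

Lemma entry_bound (Yh : J -> K -> R) (Wh : I -> L -> R) :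
  opnorm (mm Uh (tr Yh) + mm Wh (tr Vh)) <= 1 ->
  forall a b, `|(mm Uh (tr Yh) + mm Wh (tr Vh)) a b| <=
     vnorm2 (P a) + vnorm2 (fun d => Q d b).
Proof.
set Nh := mm Uh (tr Yh) + mm Wh (tr Vh) => HN a b.
have D : Nh = mm P Nh + mm (@idm I - P) (mm Nh Q) := decomp Yh Wh.
rewrite [in X in `|X|]D faddE.
apply: le_trans (ler_normD _ _) _; apply: lerD.
  apply: le_trans (cs _ _) _.
  rewrite -[leRHS]mulr1 ler_wpM2l ?vnorm2_ge0 //.
  have -> : (fun j => Nh j b) = mv Nh (fun d => (d == b)%:R).
    apply: funext => j; rewrite /mv (bigD1 b) //= eqxx mulr1 big1 ?addr0 //.
    by move=> d /negPf ->; rewrite mulr0.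
  apply: le_trans (opnorm_le _ _) HN.
  rewrite /vnorm2 (bigD1 b) //= eqxx expr1n big1 ?addr0 ?sqrtr1 //.
  by move=> d /negPf ->; rewrite expr0n.
apply: le_trans (cs _ _) _.
rewrite -[leRHS]mul1r; apply: ler_pM; rewrite ?vnorm2_ge0 //.
  rewrite /vnorm2 -sqrtr1 ler_sqrt ?ler01 //.
  rewrite (sym_idem_sq Dsym DD) faddE foppE /idm eqxx lerBlDr lerDl.
  by rewrite -(sym_idem_sq Psym PP) sumsq_ge0.
have -> : (fun j => mm Nh Q j b) = mv Nh (fun d => Q d b) by [].
exact: opnorm_scale.
Qed.

End Core.

End CS.

Section Tens.
Variable R : realType.
Variable n : nat.
Local Notation n3 := n.+1.

Lemma bcirc_prod n1 n2 n4 (A : tensor R n1 n2 n3) (B : tensor R n2 n4 n3) :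
  bcirc (tprod A B) = mm (bcirc A) (bcirc B).
Proof.
apply: funext => p; apply: funext => q.
rewrite /bcirc /tprod /mm ffunE summxE.
rewrite -(pair_big xpredT xpredT (fun s m => A (osub p.1 s) p.2 m * B (osub s q.1) m q.2)) /=.
symmetry; rewrite (reindex_inj (addIr q.1)) /=.
apply: eq_bigr => j _; rewrite mxE; apply: eq_bigr => m _.
by rewrite !osubE addrK opprD addrA [p.1 - j - q.1]addrAC.
Qed.

Lemma bcirc_tr n1 n2 (A : tensor R n1 n2 n3) : bcirc (ttr A) = tr (bcirc A).
Proof.
apply: funext => p; apply: funext => q.
by rewrite /bcirc /ttr /tr ffunE mxE onegE !osubE opprB.
Qed.

Lemma bcirc_id r : bcirc (tid R r n3) = @idm R _.
Proof.
apply: funext => p; apply: funext => q.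
rewrite /bcirc /tid /idm ffunE osubE.
case: p q => [p1 p2] [q1 q2] /=; rewrite xpair_eqE.
have -> : (val (p1 - q1) == 0%N) = (p1 == q1).
  by rewrite -[0%N]/(val (0 : 'I_n3)) val_eqE subr_eq0.
by case: (p1 == q1); rewrite ?mxE ?andbF //.
Qed.

Lemma bcirc_add n1 n2 (A B : tensor R n1 n2 n3) :
  bcirc [ffun k => A k + B k] = bcirc A + bcirc B.
Proof.
apply: funext => p; apply: funext => q.
by rewrite faddE /bcirc ffunE mxE.
Qed.

Lemma bcirc_scale n1 n2 (c : R) (A : tensor R n1 n2 n3) :
  bcirc [ffun k => c *: A k] = (fun p q => c * bcirc A p q).
Proof.
apply: funext => p; apply: funext => q.
by rewrite /bcirc ffunE mxE.
Qed.

Lemma bcirc_0 n1 n2 : bcirc (0 : tensor R n1 n2 n3) = 0.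
Proof.
apply: funext => p; apply: funext => q.
by rewrite /bcirc f0E ffunE mxE.
Qed.

Lemma bcirc_entry n1 n2 (A : tensor R n1 n2 n3) k i l : A k i l = bcirc A (k, i) (0, l).
Proof. by rewrite /bcirc osubE subr0. Qed.

Lemma col_shift n1 n2 (A : tensor R n1 n2 n3) s m :
  \sum_c bcirc A c (s, m) ^+ 2 = \sum_c bcirc A c (0, m) ^+ 2.
Proof.
rewrite -!(pair_big xpredT xpredT (fun k i => bcirc A (k, i) _ ^+ 2)) /=.
rewrite (reindex_inj (addIr s)) /=.
apply: eq_bigr => k _; apply: eq_bigr => i _.
by rewrite /bcirc /= !osubE addrK subr0.
Qed.

Definition colnorm n1 n2 (A : tensor R n1 n2 n3) (m : 'I_n2) :=
  vnorm2 (fun c => bcirc A c (0, m)).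

Lemma tfrob_ebasis N (A : tensor R N N n3) (m : 'I_N) :
  tfrob (tprod A (ebasis R n3 m)) = colnorm A m.
Proof.
rewrite /tfrob /colnorm /vnorm2; congr Num.sqrt.
rewrite -(pair_big xpredT xpredT (fun k i => bcirc A (k, i) _ ^+ 2)) /=.
apply: eq_bigr => k _; apply: eq_bigr => i _.
rewrite big_ord1; congr (_ ^+ 2).
rewrite bcirc_entry bcirc_prod /mm (bigD1 (0, m)) //= big1 ?addr0.
  by rewrite /bcirc /ebasis !osubE !subr0 ffunE /= mxE !eqxx mulr1.
case=> s j /=; rewrite /bcirc /ebasis !osubE !subr0 ffunE.
have [->|/negPf s0] := eqVneq s 0.
  rewrite /= mxE xpair_eqE eqxx /= => /negPf ->; by rewrite mulr0.
have -> : (val s == 0%N) = false by rewrite -[0%N]/(val (0 : 'I_n3)) val_eqE s0.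
by rewrite mxE mulr0.
Qed.

End Tens.

Section Main.
Variable R : realType.
Variable n : nat.
Local Notation n3 := n.+1.
Local Open Scope classical_set_scope.

Lemma beta_ge0 N r (U : tensor R N r n3) : 0 <= beta U.
Proof.
rewrite /beta; elim/big_ind: _ => //.
  by move=> x y hx hy; rewrite le_max hx.
by move=> i _; rewrite /tfrob sqrtr_ge0.
Qed.

Lemma beta_col N r (U : tensor R N r n3) m : colnorm (Defs.proj U) m <= beta U.
Proof.
rewrite /beta -tfrob_ebasis.
exact: (le_bigmax 0 (fun i => tfrob (tprod (Defs.proj U) (ebasis R n3 i))) m).
Qed.

Lemma orth_flat N r (U : tensor R N r n3) :
  tprod (ttr U) U = tid R r n3 -> mm (tr (bcirc U)) (bcirc U) = @idm R _.
Proof. by move=> H; rewrite -bcirc_tr -bcirc_prod H bcirc_id. Qed.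

Lemma bcirc_proj N r (U : tensor R N r n3) :
  bcirc (Defs.proj U) = mm (bcirc U) (tr (bcirc U)).
Proof. by rewrite /Defs.proj bcirc_prod bcirc_tr. Qed.

Lemma vnorm2_row_col N r (U : tensor R N r n3) a :
  vnorm2 (mm (bcirc U) (tr (bcirc U)) a) = colnorm (Defs.proj U) a.2.
Proof.
rewrite /colnorm /vnorm2 -(col_shift _ a.1) -surjective_pairing bcirc_proj.
congr Num.sqrt; apply: eq_bigr => c _.
by rewrite /mm; congr (_ ^+ 2); apply: eq_bigr => k _; rewrite mulrC.
Qed.

Lemma tinf_le n1 n2 (A : tensor R n1 n2 n3) (x : R) :
  0 <= x -> (forall k i j, `|A k i j| <= x) -> tinf A <= x.
Proof.
move=> x0 H; rewrite /tinf; apply/bigmax_leP; split => // k _.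
by apply/bigmax_leP; split => // i _; apply/bigmax_leP; split => // j _.
Qed.

Lemma tinf_ge n1 n2 (A : tensor R n1 n2 n3) k i j : `|A k i j| <= tinf A.
Proof.
rewrite /tinf.
apply: le_trans (le_bigmax _ _ k).
apply: le_trans (le_bigmax _ _ i).
exact: (le_bigmax _ (fun j => `|A k i j|) j).
Qed.

Variables (N1 N2 r : nat) (U : tensor R N1 r n3) (V : tensor R N2 r n3).
Hypothesis HU : tprod (ttr U) U = tid R r n3.
Hypothesis HV : tprod (ttr V) V = tid R r n3.

Lemma upper (Nt : tensor R N1 N2 n3) :
  tangent U V Nt -> tspec Nt <= 1 -> tinf Nt <= beta U + beta V.
Proof.
move=> [Y [W ->]] Hs.
apply: tinf_le; first by rewrite addr_ge0 ?beta_ge0.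
move=> k i j; rewrite bcirc_entry.
have EB : bcirc [ffun k => tprod U (ttr Y) k + tprod W (ttr V) k] =
   mm (bcirc U) (tr (bcirc Y)) + mm (bcirc W) (tr (bcirc V)).
  by rewrite bcirc_add !bcirc_prod !bcirc_tr.
move: Hs; rewrite /tspec EB => Hs.
apply: le_trans (entry_bound (orth_flat HU) (orth_flat HV) Hs (k, i) (0, j)) _.
apply: lerD; first by rewrite vnorm2_row_col beta_col.
rewrite -bcirc_proj; exact: beta_col.
Qed.

End Main.

Section Lower.
Variable R : realType.
Variable n : nat.
Local Notation n3 := n.+1.
Local Open Scope classical_set_scope.
Variables (N1 N2 : nat).

Definition Emat (a : 'I_N1) (b : 'I_N2) : tensor R N1 N2 n3 :=
  [ffun k : 'I_n3 => if val k == 0%N then delta_mx a b else 0].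

Lemma Emat_bc a b s j q l :
  bcirc (Emat a b) (s, j) (q, l) = ((s == q) && (j == a) && (l == b))%:R.
Proof.
rewrite /bcirc osubE /Emat ffunE.
have -> : (val (s - q) == 0%N) = (s == q).
  by rewrite -[0%N]/(val (0 : 'I_n3)) val_eqE subr_eq0.
by case: (s == q); rewrite mxE.
Qed.

Lemma mm_E (I : finType) (M : I -> 'I_n3 * 'I_N1 -> R) a b p q :
  mm M (bcirc (Emat a b)) p q = M p (q.1, a) * (q.2 == b)%:R.
Proof.
rewrite /mm (bigD1 (q.1, a)) //= big1 ?addr0.
  by case: q => q1 q2; rewrite Emat_bc /= !eqxx.
case: q => q1 q2; case=> s j; rewrite xpair_eqE negb_and /= => H.
rewrite Emat_bc /=; case/orP: H => /negPf H.
  by rewrite H mulr0.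
by rewrite H andbF mulr0.
Qed.

Lemma E_mm (J : finType) (M : 'I_n3 * 'I_N2 -> J -> R) a b p q :
  mm (bcirc (Emat a b)) M p q = (p.2 == a)%:R * M (p.1, b) q.
Proof.
rewrite /mm (bigD1 (p.1, b)) //= big1 ?addr0.
  by case: p => p1 p2; rewrite Emat_bc /= !eqxx andbT mulrC.
case: p => p1 p2; case=> s j; rewrite xpair_eqE negb_and /= => H.
rewrite Emat_bc /=; case/orP: H => /negPf H.
  by rewrite eq_sym H mul0r.
by rewrite H andbF mul0r.
Qed.

End Lower.

Section Lower2.
Variable R : realType.

Lemma mm_scale_r (I J K : finType) (A : I -> J -> R) (c : R) (B : J -> K -> R) :
  mm A (fun p q => c * B p q) = (fun p q => c * mm A B p q).
Proof.
apply: funext => p; apply: funext => q; rewrite /mm mulr_sumr.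
by apply: eq_bigr => j _; rewrite mulrCA.
Qed.

Lemma mm_scale_l (I J K : finType) (A : I -> J -> R) (c : R) (B : J -> K -> R) :
  mm (fun p q => c * A p q) B = (fun p q => c * mm A B p q).
Proof.
apply: funext => p; apply: funext => q; rewrite /mm mulr_sumr.
by apply: eq_bigr => j _; rewrite mulrA.
Qed.

Lemma mm_0l (I J K : finType) (B : J -> K -> R) : mm (0 : I -> J -> R) B = 0.
Proof.
by apply: funext => p; apply: funext => q; rewrite /mm big1 // => j _; rewrite f0E mul0r.
Qed.

Lemma num1 (s b : R) : 0 < s -> (s * b)^-1 * b ^+ 2 = b / s.
Proof.
move=> s0; have [->|b0] := eqVneq b 0; first by rewrite expr0n !mulr0 mul0r.
rewrite invfM expr2 -mulrA [b^-1 * _]mulrA mulVf // mul1r mulrC.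
by [].
Qed.

Lemma num2 (s b : R) : ((s * b)^-1) ^+ 2 * (s * b) ^+ 2 <= 1.
Proof.
rewrite -exprMn; have [->|h] := eqVneq (s * b) 0; first by rewrite mulr0 expr0n ler01.
by rewrite mulVf // expr1n.
Qed.

Lemma tspec_frob n1 n2 n (A : tensor R n1 n2 n.+1) :
  \sum_p \sum_q bcirc A p q ^+ 2 <= 1 -> tspec A <= 1.
Proof.
move=> H; apply: le_trans (opnorm_frob _) _.
by rewrite -sqrtr1 ler_sqrt.
Qed.

End Lower2.

Section Main2.
Variable R : realType.
Variable n : nat.
Local Notation n3 := n.+1.
Local Open Scope classical_set_scope.

Lemma tr0 (I J : finType) : tr (0 : I -> J -> R) = 0.
Proof. by []. Qed.

Lemma mm_0r (I J K : finType) (A : I -> J -> R) : mm A (0 : J -> K -> R) = 0.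
Proof.
by apply: funext => p; apply: funext => q; rewrite /mm big1 // => j _; rewrite f0E mulr0.
Qed.

Lemma Pb_sym N r (U : tensor R N r n3) p q :
  bcirc (Defs.proj U) p q = bcirc (Defs.proj U) q p.
Proof. by rewrite bcirc_proj /mm; apply: eq_bigr => k _; rewrite mulrC. Qed.

Lemma Pb_col N r (U : tensor R N r n3) a q1 :
  \sum_p bcirc (Defs.proj U) p (q1, a) ^+ 2 = colnorm (Defs.proj U) a ^+ 2.
Proof. by rewrite col_shift /colnorm /vnorm2 sqr_sqrtr // sumsq_ge0. Qed.

Lemma Pb_diag N r (U : tensor R N r n3) a :
  tprod (ttr U) U = tid R r n3 ->
  bcirc (Defs.proj U) (0, a) (0, a) = colnorm (Defs.proj U) a ^+ 2.
Proof.
move=> HU.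
have := sym_idem_sq (Psym (bcirc U)) (PP (orth_flat HU)) (0, a).
rewrite -bcirc_proj => <-; rewrite -(Pb_col U a 0).
by apply: eq_bigr => c _; rewrite Pb_sym.
Qed.

Lemma sqrt_n3_gt0 : 0 < Num.sqrt (n3%:R : R).
Proof. by rewrite sqrtr_gt0 ltr0Sn. Qed.

Lemma final_num (b : R) :
  ((Num.sqrt (n3%:R : R) * b)^-1 ^+ 2 * b ^+ 2) *+ n3 <= 1.
Proof.
have := num2 (Num.sqrt (n3%:R : R)) b.
rewrite [X in _ * X <= _]exprMn sqr_sqrtr ?ler0n // -[(_ * _) *+ n3]mulr_natr.
by rewrite [_ * b ^+ 2]mulrC mulrA.
Qed.

Variables (N1 N2 r : nat) (U : tensor R N1 r n3) (V : tensor R N2 r n3).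
Hypothesis HU : tprod (ttr U) U = tid R r n3.
Hypothesis HV : tprod (ttr V) V = tid R r n3.

Lemma lowerU (a : 'I_N1) (b : 'I_N2) : exists Nt, tangent U V Nt /\ tspec Nt <= 1 /\
  colnorm (Defs.proj U) a / Num.sqrt (n3%:R) <= tinf Nt.
Proof.
set be := colnorm (Defs.proj U) a; set s := Num.sqrt (n3%:R : R); set ka := (s * be)^-1.
pose Z : tensor R r N2 n3 := [ffun k => ka *: tprod (ttr U) (Emat R n a b) k].
pose Y := ttr Z.
exists [ffun k => tprod U (ttr Y) k + tprod (0 : tensor R N1 r n3) (ttr V) k].
set Pb := bcirc (Defs.proj U).
have EB : bcirc [ffun k => tprod U (ttr Y) k + tprod (0 : tensor R N1 r n3) (ttr V) k]
   = (fun p q => ka * (Pb p (q.1, a) * (q.2 == b)%:R)).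
  rewrite bcirc_add !bcirc_prod !bcirc_tr bcirc_0 mm_0l addr0 /Y /Z bcirc_scale.
  rewrite bcirc_prod bcirc_tr trK mm_scale_r -mmA_f -bcirc_proj -/Pb.
  by apply: funext => p; apply: funext => q; rewrite mm_E.
split; first by exists Y, 0.
split.
  apply: tspec_frob; rewrite EB.
  rewrite (eq_bigr (fun p => \sum_(q1 < n3) (ka * Pb p (q1, a)) ^+ 2)); last first.
    move=> p _; rewrite -(pair_big xpredT xpredT (fun q1 q2 => (ka * (Pb p (q1, a) * (q2 == b)%:R)) ^+ 2)) /=.
    apply: eq_bigr => q1 _; rewrite (bigD1 b) //= eqxx mulr1 big1 ?addr0 //.
    by move=> j /negPf ->; rewrite !mulr0 expr0n.
  rewrite exchange_big /=.
  under eq_bigr do under eq_bigr do rewrite exprMn.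
  under eq_bigr do rewrite -mulr_sumr Pb_col -/be.
  by rewrite sumr_const card_ord final_num.
apply: le_trans (tinf_ge _ 0 a b).
rewrite bcirc_entry EB /= eqxx mulr1 /Pb Pb_diag // -/be /ka num1 ?sqrt_n3_gt0 //.
by rewrite ger0_norm // divr_ge0 ?sqrtr_ge0.
Qed.

Lemma lowerV (a : 'I_N2) (b : 'I_N1) : exists Nt, tangent U V Nt /\ tspec Nt <= 1 /\
  colnorm (Defs.proj V) a / Num.sqrt (n3%:R) <= tinf Nt.
Proof.
set be := colnorm (Defs.proj V) a; set s := Num.sqrt (n3%:R : R); set ka := (s * be)^-1.
pose W : tensor R N1 r n3 := [ffun k => ka *: tprod (Emat R n b a) V k].
exists [ffun k => tprod U (ttr (0 : tensor R N2 r n3)) k + tprod W (ttr V) k].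
set Qb := bcirc (Defs.proj V).
have EB : bcirc [ffun k => tprod U (ttr (0 : tensor R N2 r n3)) k + tprod W (ttr V) k]
   = (fun p q => ka * ((p.2 == b)%:R * Qb (p.1, a) q)).
  rewrite bcirc_add !bcirc_prod !bcirc_tr bcirc_0 tr0 mm_0r add0r /W bcirc_scale.
  rewrite bcirc_prod mm_scale_l mmA_f -bcirc_proj -/Qb.
  by apply: funext => p; apply: funext => q; rewrite E_mm.
split; first by exists 0, W.
split.
  apply: tspec_frob; rewrite EB.
  rewrite -(pair_big xpredT xpredT (fun p1 p2 => \sum_q (ka * ((p2 == b)%:R * Qb (p1, a) q)) ^+ 2)) /=.
  rewrite (eq_bigr (fun p1 => \sum_q (ka * Qb q (p1, a)) ^+ 2)); last first.
    move=> p1 _; rewrite (bigD1 b) //= [X in _ + X]big1 ?addr0.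
      by apply: eq_bigr => q _; rewrite eqxx mul1r /Qb Pb_sym.
    by move=> j /negPf ->; rewrite big1 // => q _; rewrite mul0r mulr0 expr0n.
  under eq_bigr do under eq_bigr do rewrite exprMn.
  under eq_bigr do rewrite -mulr_sumr Pb_col -/be.
  by rewrite sumr_const card_ord final_num.
apply: le_trans (tinf_ge _ 0 b a).
rewrite bcirc_entry EB /= eqxx mul1r /Qb Pb_diag // -/be /ka num1 ?sqrt_n3_gt0 //.
by rewrite ger0_norm // divr_ge0 ?sqrtr_ge0.
Qed.

End Main2.

Unset Implicit Arguments.

Theorem lemma3 (R : realType) (N1 N2 N3 r : nat)
  (L : tensor R N1 N2 N3) (U : tensor R N1 r N3) (S : tensor R r r N3)
  (V : tensor R N2 r N3) :
  (0 < N1)%N -> (0 < N2)%N -> (0 < N3)%N ->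
  L = tprod (tprod U S) (ttr V) ->
  tprod (ttr U) U = tid R r N3 ->
  tprod (ttr V) V = tid R r N3 ->
  fdiag S ->
  inc U V / Num.sqrt (N3%:R) <= xi U V /\ xi U V <= 2 * inc U V.
Proof.
move=> N1p N2p N3p _ HU HV _.
destruct N3 as [|n]; first by [].
pose Sx := ([set tinf Nt | Nt in [set Nt | tangent U V Nt /\ tspec Nt <= 1]])%classic.
have ub : ubound Sx (2 * inc U V).
  move=> _ [Nt [Ht Hs] <-]; apply: le_trans (upper HU HV Ht Hs) _.
  have h1 : beta U <= inc U V by rewrite /inc le_max lexx.
  have h2 : beta V <= inc U V by rewrite /inc le_max lexx orbT.
  lra.
have hsup : has_ubound Sx := ex_intro _ _ ub.
have s0 := @sqrt_n3_gt0 R n.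
have memU : forall a, colnorm (Defs.proj U) a / Num.sqrt (n.+1%:R) <= xi U V.
  move=> a; have [Nt [Ht [Hs Hle]]] := lowerU V HU a (Ordinal N2p).
  apply: le_trans Hle _; have := ub_le_sup hsup; move=> /(_ (tinf Nt)); apply; by exists Nt.
have memV : forall a, colnorm (Defs.proj V) a / Num.sqrt (n.+1%:R) <= xi U V.
  move=> a; have [Nt [Ht [Hs Hle]]] := lowerV U HV a (Ordinal N1p).
  apply: le_trans Hle _; have := ub_le_sup hsup; move=> /(_ (tinf Nt)); apply; by exists Nt.
have xi0 : 0 <= xi U V.
  apply: le_trans (memU (Ordinal N1p)).
  by rewrite divr_ge0 ?sqrtr_ge0.
split.
  rewrite ler_pdivrMr // /inc ge_max; apply/andP; split.
    rewrite /beta; apply/bigmax_leP; split; first by rewrite mulr_ge0 // ltW.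
    by move=> i _; rewrite tfrob_ebasis -ler_pdivrMr.
  rewrite /beta; apply/bigmax_leP; split; first by rewrite mulr_ge0 // ltW.
  by move=> i _; rewrite tfrob_ebasis -ler_pdivrMr.
apply: ge_sup => //.
have [Nt [Ht [Hs Hle]]] := lowerU V HU (Ordinal N1p) (Ordinal N2p).
by exists (tinf Nt), Nt.
Qed.
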